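(* Let $X$, $H$, $v=(r,H,s)$ (primitive), $Y$, $a,b,c,d$, $\widetilde H=H/d$ be as in the context, let $\gamma=\gamma(\widetilde H)$ in $N(X)$, and assume $\gcd(c,d\gamma)=1$. Then: (1) $N(X)=[\widetilde H,\ K(\widetilde H),\ \gamma\widetilde H^*+u^*(\widetilde H)]$, where $\widetilde H^*=\widetilde H/\widetilde H^2=d^2\widetilde H/(2abc^2)$, and $u^*(\widetilde H)+K(\widetilde H)$ has order $2abc^2/(d^2\gamma)$ in $K(\widetilde H)^*/K(\widetilde H)$. (2) Let $h\in N(Y)$ be the class of $(-a,0,b)$ mod $\mathbb Zv$. Then $h^2=2ab$, $h$ is divisible by $d$ in $N(Y)$, $\widetilde h=h/d$ is primitive in $N(Y)$, $\gamma(\widetilde h)=\gamma$ (computed in $N(Y)$), and $N(Y)=[\widetilde h,\ K(h),\ \gamma\widetilde h^*+u^*(\widetilde h)]$, where $K(h)=h^\perp\subset N(Y)$, $\widetilde h^*=d^2\widetilde h/(2ab)$, and $u^*(\widetilde h)+K(h)$ has order $2ab/(d^2\gamma)$ in $K(h)^*/K(h)$. (3) Under the map $K(\widetilde H)\to N(Y)$, $k\mapsto (0,k,0)\bmod\mathbb Zv$, $K(\widetilde H)$ is identified with a sublattice of $K(h)$ (so that $K(h)\otimes\mathbb Q=K(\widetilde H)\otimes\mathbb Q$), and $$K(h)=\Big[K(\widetilde H),\ \tfrac{2ab}{d^2\gamma}\,c\,u^*(\widetilde H)\Big],\qquad u^*(\widetilde h)+K(h)=m(a,b)\,c\,u^*(\widetilde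 H)+K(h),$$ where $m(a,b)$ is an integer with $m(a,b)\equiv-1\pmod{2a}$, $m(a,b)\equiv1\pmod{2b}$ (only its class mod $2ab/(d^2\gamma)$ matters).
   Context: $X$ is a smooth complex projective K3 surface with Picard lattice $N(X)\subset H^2(X,\mathbb Z)$. $H\in N(X)$ is a polarization with $H^2=2rs$, $r,s\in\mathbb N$; $d\in\mathbb N$ with $\widetilde H=H/d$ primitive. On $H^*(X,\mathbb Z)\cong\mathbb Z\oplus H^2(X,\mathbb Z)\oplus\mathbb Z$ use the Mukai pairing $((u_0,u_1,u_2),(v_0,v_1,v_2))=-(u_0v_2+u_2v_0)+u_1\cdot v_1$; $v=(r,H,s)$ is isotropic and primitive. $Y$ is the moduli space of $H$-semistable coherent sheaves with Mukai vector $v$ (minimal resolution if singular), a K3 surface; by Mukai, $H^2(Y,\mathbb Z)\cong v^\perp/\mathbb Zv$ as Hodge structures, and $N(Y)=v^\perp_{\mathbb Z\oplus N(X)\oplus\mathbb Z}/\mathbb Zv$. $c=\gcd(r,s)$, $a=r/c$, $b=s/c$. For an even lattice $S$ and primitive $P\in S$ with $P^2=2m\neq0$: $\gamma(P)>0$ with $P\cdot S=\gamma(P)\mathbb Z$; $K(P)=P^\perp\subset S$; $P^*=P/(2m)$; $u^*(P)\in K(P)^*$ is an element with $\gamma(P)P^*+u^*(P)\in S$ (canonical mod $K(P)$). $[x_1,\dots,x_k]$ denotes the subgroup generated by the listed elements/sublattices inside the ambient rational space. *)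

(* Defs.v *)
From HB Require Import structures.
From mathcomp Require Import all_boot all_order all_algebra.
Set Implicit Arguments. Unset Strict Implicit. Unset Printing Implicit Defensive.
Import Order.TTheory GRing.Theory Num.Theory.
Local Open Scope ring_scope.

(* When the lattice is a quotient (N(Y) = v^perp / Z v) we represent it by
   its preimage, which contains the whole line Q v; all sublattices
   considered then contain Q v as well, so equalities hold modulo Q v. *)
Section Generic.
Variable V : lmodType rat.
Variable B : V -> V -> rat.

Definition qint (q : rat) : Prop := q \is a Num.int.

Definition seteq (S T : V -> Prop) : Prop := forall z, S z <-> T z.

Definition lat_gamma (L : V -> Prop) (P : V) (g : nat) : Prop :=
  (0 < g)%N /\
  forall q : rat, (exists x, L x /\ B P x = q) <-> exists z : int, q = g%:R * z%:~R.

Definition Kperp (L : V -> Prop) (P : V) : V -> Prop :=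
  fun x => L x /\ B P x = 0.

Definition qspan (S : V -> Prop) : V -> Prop :=
  fun x => exists n : nat, (0 < n)%N /\ S (n%:R *: x).

Definition dual (S : V -> Prop) : V -> Prop :=
  fun y => qspan S y /\ forall k, S k -> qint (B y k).

Definition Pstar (P : V) : V := (B P P)^-1 *: P.

Definition is_ustar (L : V -> Prop) (P : V) (g : nat) (u : V) : Prop :=
  dual (Kperp L P) u /\ L (g%:R *: Pstar P + u).

Definition order_mod (S : V -> Prop) (y : V) (n : nat) : Prop :=
  [/\ (0 < n)%N, S (n%:R *: y) & forall k : nat, (0 < k < n)%N -> ~ S (k%:R *: y)].

(* P primitive in L; Rad = the subspace one quotients by (0 or Q v) *)
Definition primitive (L Rad : V -> Prop) (P : V) : Prop :=
  [/\ L P, ~ Rad P & forall (n : nat) x, L x -> P = n%:R *: x -> n = 1%N].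

Definition gen3 (x : V) (S : V -> Prop) (y : V) : V -> Prop :=
  fun z => exists (i j : int) k, S k /\ z = i%:~R *: x + k + j%:~R *: y.
End Generic.

Definition zero_set (V : zmodType) : V -> Prop := fun x => x = 0.

Definition bform n (G : 'M[rat]_n) (x y : 'rV[rat]_n) : rat := (x *m G *m y^T) 0 0.

Definition intvec n (x : 'rV[rat]_n) : Prop := forall i, x 0 i \is a Num.int.

Definition intmx n (G : 'M[int]_n) : 'M[rat]_n := map_mx (fun z : int => z%:~R) G.

(* Mukai lattice Z + N + Z, with pairing -(u0 v2 + u2 v0) + u1.v1 *)
Definition mukai_gram n (G : 'M[rat]_n) : 'M[rat]_(1 + n + 1) :=
  block_mx (block_mx (0 : 'M_1) 0 0 G : 'M_(1 + n))
           (col_mx (-1 : 'M_1) 0) (row_mx (-1 : 'M_1) 0) (0 : 'M_1).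

Definition mukai_vec n (r : rat) (x : 'rV[rat]_n) (s : rat) : 'rV[rat]_(1 + n + 1) :=
  row_mx (row_mx (r%:M : 'M_1) x) (s%:M : 'M_1).

(* N(Y) = v^perp / Z v, represented by its preimage in v^perp (x) Q,
   which contains the line Q v *)
Definition NYlat n (G : 'M[rat]_n) (v : 'rV[rat]_(1 + n + 1)) : 'rV[rat]_(1 + n + 1) -> Prop :=
  fun w => bform (mukai_gram G) v w = 0 /\ exists t : rat, intvec (w - t *: v).

Definition lineQ n (v : 'rV[rat]_n) : 'rV[rat]_n -> Prop :=
  fun w => exists t : rat, w = t *: v.

Definition iotaY n (x : 'rV[rat]_n) : 'rV[rat]_(1 + n + 1) := mukai_vec 0 x 0.

(* Main.v *)
Require Import Defs.
From HB Require Import structures.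
From mathcomp Require Import all_boot all_order all_algebra.
From mathcomp Require Import ring lra zify.
Import Order.TTheory GRing.Theory Num.Theory.
Local Open Scope ring_scope.

Set Implicit Arguments. Unset Strict Implicit. Unset Printing Implicit Defensive.

Lemma qintP (q : rat) : qint q <-> exists z : int, q = z%:~R.
Proof. split; [by move/intrP | by move=> [z ->]; apply: intr_int]. Qed.

Lemma qint_int (z : int) : qint z%:~R. Proof. exact: intr_int. Qed.
Lemma qint_nat (k : nat) : qint k%:R. Proof. exact: natr_int. Qed.
Lemma qintD x y : qint x -> qint y -> qint (x + y).
Proof. by move=> /qintP[a ->] /qintP[b ->]; rewrite -intrD; apply: qint_int. Qed.
Lemma qintM x y : qint x -> qint y -> qint (x * y).
Proof. by move=> /qintP[a ->] /qintP[b ->]; rewrite -intrM; apply: qint_int. Qed.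
Lemma qintN x : qint x -> qint (- x).
Proof. by move=> /qintP[a ->]; rewrite -intrN; apply: qint_int. Qed.
Lemma qintB x y : qint x -> qint y -> qint (x - y).
Proof. by move=> hx hy; apply: qintD => //; apply: qintN. Qed.
Lemma qint0 : qint 0. Proof. exact: (qint_nat 0). Qed.
Lemma qint1 : qint 1. Proof. exact: (qint_nat 1). Qed.

Lemma qint_between (q : rat) : qint q -> 0 < q -> q < 1 -> False.
Proof.
move=> /qintP[z ->]; rewrite ltr0z -[1]/(1%:~R) ltr_int => h1 h2.
lia.
Qed.

Ltac qauto := repeat first [ assumption | apply: qint_nat | apply: qint_int | apply: qintD | apply: qintB | apply: qintM | apply: qintN ].


Section Gen.
Variable V : lmodType rat.
Variable B : V -> V -> rat.
Hypothesis Bsym : forall x y, B x y = B y x.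
Hypothesis BD : forall x y z, B x (y + z) = B x y + B x z.
Hypothesis BZ : forall x q y, B x (q *: y) = q * B x y.
Variable L : V -> Prop.
Hypothesis LD : forall x y, L x -> L y -> L (x + y).
Hypothesis LZ : forall (i : int) x, L x -> L (i%:~R *: x).
Hypothesis Lint : forall x y, L x -> L y -> qint (B x y).
Variable P : V.
Variable g : nat.
Hypothesis LP : L P.
Hypothesis TP : 0 < B P P.
Hypothesis gam : lat_gamma B L P g.
Hypothesis prim : forall q, L (q *: P) -> qint q.

Lemma BN x y : B x (- y) = - B x y.
Proof. by rewrite -scaleN1r BZ mulN1r. Qed.
Lemma BB x y z : B x (y - z) = B x y - B x z.
Proof. by rewrite BD BN. Qed.
Lemma B0 x : B x 0 = 0.
Proof. by rewrite -(scale0r 0) BZ mul0r. Qed.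
Lemma BZl x q y : B (q *: x) y = q * B x y.
Proof. by rewrite Bsym BZ Bsym. Qed.
Lemma BDl x y z : B (x + y) z = B x z + B y z.
Proof. by rewrite Bsym BD !(Bsym z). Qed.
Lemma BBl x y z : B (x - y) z = B x z - B y z.
Proof. by rewrite Bsym BB !(Bsym z). Qed.
Lemma LN x : L x -> L (- x).
Proof. by move=> h; rewrite -scaleN1r; apply: (LZ (-1)). Qed.
Lemma LB x y : L x -> L y -> L (x - y).
Proof. by move=> hx hy; apply: LD => //; apply: LN. Qed.
Lemma LZn (k : nat) x : L x -> L (k%:R *: x).
Proof. by move=> h; apply: (LZ k). Qed.

Lemma BPstar : B P (Pstar B P) = 1.
Proof. by rewrite /Pstar BZ mulVf // gt_eqF. Qed.

Lemma gam_g : exists x, L x /\ B P x = g%:R.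
Proof. by apply/(proj2 (proj2 gam g%:R)); exists 1; rewrite mulr1. Qed.

Lemma gam_k : exists k : nat, (0 < k)%N /\ B P P = g%:R * k%:R.
Proof.
have [g0 _] := gam.
have [z hz] : exists z : int, B P P = g%:R * z%:~R by apply/(proj1 (proj2 gam (B P P))); exists P.
have zp : 0 < z.
  have : 0 < g%:R * z%:~R :> rat by rewrite -hz.
  by rewrite pmulr_rgt0 ?ltr0n // ltr0z.
exists `|z|%N; split; first by lia.
by rewrite hz natr_absz gtr0_norm.
Qed.

Lemma gP : 0 < g%:R :> rat.
Proof. by have [g0 _] := gam; rewrite ltr0n. Qed.

Lemma ustar_orth u : is_ustar B L P g u -> B P u = 0.
Proof.
move=> [[[N [N0 [_ h]]] _] _].
move: h; rewrite BZ => /eqP; rewrite mulf_eq0 pnatr_eq0 => /orP[h|/eqP //].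
by move: N0; rewrite (eqP h).
Qed.

Lemma gen_exists : exists u, is_ustar B L P g u.
Proof.
have [x [Lx Bx]] := gam_g.
have [k [k0 hk]] := gam_k.
have Tn : B P P != 0 by rewrite gt_eqF.
exists (x - g%:R *: Pstar B P); split; last by rewrite addrC subrK.
split.
  exists k; split => //; split.
    have -> : k%:R *: (x - g%:R *: Pstar B P) = k%:R *: x - P.
      rewrite scalerBr /Pstar !scalerA hk; congr (_ - _).
      rewrite -[RHS]scale1r; congr (_ *: _).
      move: Tn; rewrite hk mulf_eq0 negb_or => /andP[? ?]; field.
      by apply/andP; split.
    by apply: LB => //; apply: LZn.
  by rewrite BZ BB BZ BPstar Bx mulr1 subrr mulr0.
move=> y [Ly By0].
rewrite BBl BZl /Pstar BZl By0 !mulr0 subr0.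
exact: Lint.
Qed.

Lemma gen_uniq u1 u2 : is_ustar B L P g u1 -> is_ustar B L P g u2 ->
  Kperp B L P (u1 - u2).
Proof.
move=> h1 h2; split; last by rewrite BB (ustar_orth h1) (ustar_orth h2) subrr.
have -> : u1 - u2 = (g%:R *: Pstar B P + u1) - (g%:R *: Pstar B P + u2).
  by rewrite opprD addrACA subrr add0r.
by apply: LB; [case: h1 | case: h2].
Qed.

Lemma gen_main u : is_ustar B L P g u ->
  seteq L (gen3 P (Kperp B L P) (g%:R *: Pstar B P + u)) /\
  exists k : nat, order_mod (Kperp B L P) u k /\ (k%:R : rat) = B P P / g%:R.
Proof.
move=> hu; have orth := ustar_orth hu.
have [_ Ly] := hu.
set y := g%:R *: Pstar B P + u in Ly *.
have By : B P y = g%:R by rewrite /y BD BZ BPstar orth mulr1 addr0.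
split.
  move=> z; split.
    move=> Lz.
    have [j hj] : exists j : int, B P z = g%:R * j%:~R.
      by apply/(proj1 (proj2 gam (B P z))); exists z.
    exists 0, j, (z - j%:~R *: y); split.
      split; first by apply: LB => //; apply: LZ.
      by rewrite BB BZ By hj mulrC subrr.
    by rewrite scale0r add0r subrK.
  move=> [i [j [k [[Lk _] ->]]]].
  by apply: LD; [apply: LD => //; apply: LZ|apply: LZ].
have [k [k0 hk]] := gam_k.
have Tn : B P P != 0 by rewrite gt_eqF.
have gn : g%:R != 0 :> rat by rewrite gt_eqF // gP.
have kn : k%:R != 0 :> rat by rewrite pnatr_eq0 -lt0n.
have ku : forall q : rat, q *: u = q *: y - (q / k%:R) *: P.
  move=> q; rewrite /y scalerDr /Pstar !scalerA hk.
  rewrite addrAC [X in X + _](_ : _ = 0) ?add0r //.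
  rewrite -scalerBl; apply/eqP; rewrite scaler_eq0; apply/orP; left.
  by apply/eqP; field; rewrite kn gn.
exists k; split; last by rewrite hk; field.
split => //.
  split; last by rewrite BZ orth mulr0.
  rewrite ku divff // scale1r; apply: LB => //; exact: LZn.
move=> k' /andP[k'0 k'k] [Lk' _].
have : L ((k'%:R / k%:R) *: P).
  have -> : (k'%:R / k%:R) *: P = k'%:R *: y - k'%:R *: u by rewrite ku opprB addrC subrK.
  by apply: LB => //; apply: LZn.
move/prim/qint_between; apply.
  by apply: divr_gt0; rewrite ltr0n.
by rewrite ltr_pdivrMr ?ltr0n // mul1r ltr_nat.
Qed.
End Gen.


Section BF.
Variable m : nat.
Implicit Types (M : 'M[rat]_m) (x y z : 'rV[rat]_m).

Lemma bformD M x y z : bform M x (y + z) = bform M x y + bform M x z.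
Proof. by rewrite /bform linearD /= mulmxDr mxE. Qed.
Lemma bformZ M x q y : bform M x (q *: y) = q * bform M x y.
Proof. by rewrite /bform linearZ /= -scalemxAr mxE. Qed.
Lemma bformDl M x y z : bform M (x + y) z = bform M x z + bform M y z.
Proof. by rewrite /bform !mulmxDl mxE. Qed.
Lemma bformZl M q x y : bform M (q *: x) y = q * bform M x y.
Proof. by rewrite /bform -!scalemxAl mxE. Qed.
Lemma bform_sym M x y : M^T = M -> bform M x y = bform M y x.
Proof.
move=> hM; have h1 : forall A : 'M[rat]_1, A 0 0 = A^T 0 0 by move=> A; rewrite mxE.
rewrite /bform h1.
by rewrite !trmx_mul trmxK hM mulmxA.
Qed.

Lemma bform_int M x y : (forall i j, qint (M i j)) -> intvec x -> intvec y -> qint (bform M x y).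
Proof.
move=> hM hx hy; rewrite /bform !mxE.
apply: rpred_sum => j _; rewrite !mxE; apply: rpredM; last exact: hy.
apply: rpred_sum => i _; apply: rpredM; [exact: hx|exact: hM].
Qed.
End BF.

Lemma intvecD n (x y : 'rV[rat]_n) : intvec x -> intvec y -> intvec (x + y).
Proof. by move=> hx hy i; rewrite mxE; apply: rpredD. Qed.
Lemma intvecZ n (i : int) (x : 'rV[rat]_n) : intvec x -> intvec (i%:~R *: x).
Proof. by move=> hx j; rewrite mxE; apply: rpredM => //; apply: qint_int. Qed.
Lemma intvecN n (x : 'rV[rat]_n) : intvec x -> intvec (- x).
Proof. move=> hx j; rewrite mxE; apply: qintN; apply: hx. Qed.
Lemma intvecB n (x y : 'rV[rat]_n) : intvec x -> intvec y -> intvec (x - y).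
Proof. by move=> hx hy; apply: intvecD => //; apply: intvecN. Qed.
Lemma intvec0 n : intvec (0 : 'rV[rat]_n).
Proof. by move=> j; rewrite mxE; apply: qint0. Qed.
Lemma intvecZq n (q : rat) (x : 'rV[rat]_n) : qint q -> intvec x -> intvec (q *: x).
Proof. by move=> /qintP[i ->]; apply: intvecZ. Qed.

Lemma intmx_int n (G : 'M[int]_n) i j : qint (intmx G i j).
Proof. by rewrite mxE; apply: qint_int. Qed.
Lemma intmx_sym n (G : 'M[int]_n) : G^T = G -> (intmx G)^T = intmx G.
Proof. by move=> h; rewrite /intmx map_trmx h. Qed.

Lemma bezoutz (m k : int) : coprimez m k -> exists u v : int, u * m + v * k = 1.
Proof. move=> /eqP h; have [u [v e]] := Bezoutz m k; by exists u, v; rewrite e h. Qed.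

Lemma prim_strong n (P : 'rV[rat]_n) : primitive (@intvec n) (@zero_set _) P ->
  forall q, intvec (q *: P) -> qint q.
Proof.
move=> [hP _ hprim] q hq.
have [u [v huv]] : exists u v : int, u * numq q + v * denq q = 1.
  by apply: bezoutz; rewrite coprimezE coprime_num_den.
have dn : (denq q)%:~R != 0 :> rat by rewrite intr_eq0 denq_neq0.
have hd : intvec ((denq q)%:~R^-1 *: P).
  have -> : (denq q)%:~R^-1 *: P = u%:~R *: (q *: P) + v%:~R *: P.
    rewrite scalerA -scalerDl; congr (_ *: _).
    have h : u%:~R * (numq q)%:~R + v%:~R * (denq q)%:~R = 1 :> rat.
      by rewrite -!intrM -intrD huv.
    move: (divq_num_den q) h dn; move: (numq q) (denq q) => N D hq0 h dn.
    have -> : D%:~R^-1 = (u%:~R * N%:~R + v%:~R * D%:~R) / D%:~R :> rat by rewrite h mul1r.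
    rewrite -hq0; field => //.
  by apply: intvecD; apply: intvecZ.
have dp : (0 < denq q) by apply: denq_gt0.
have e : P = `|denq q|%N%:R *: ((denq q)%:~R^-1 *: P).
  by rewrite scalerA natr_absz gtr0_norm // mulfV ?scale1r.
have d1 := hprim `|denq q|%N _ hd e.
have h1 : denq q = 1 by lia.
rewrite -(divq_num_den q) h1 divr1; apply: qint_int.
Qed.


Section Mukai.
Variable n : nat.
Notation M := (@mukai_vec n).
Implicit Types (w : 'rV[rat]_(1 + n + 1)) (x y : 'rV[rat]_n).

Definition mw0 w : rat := lsubmx (lsubmx w) 0 0.
Definition mwx w : 'rV[rat]_n := rsubmx (lsubmx w).
Definition mw2 w : rat := rsubmx w 0 0.

Lemma mukaiE w : w = M (mw0 w) (mwx w) (mw2 w).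
Proof. by rewrite /mukai_vec /mw0 /mwx /mw2 -!mx11_scalar !hsubmxK. Qed.

Lemma mukaiD a x b a' x' b' : M a x b + M a' x' b' = M (a + a') (x + x') (b + b').
Proof. by rewrite /mukai_vec !add_row_mx !raddfD. Qed.
Lemma mukaiZ q a x b : q *: M a x b = M (q * a) (q *: x) (q * b).
Proof. by rewrite /mukai_vec !scale_row_mx !scale_scalar_mx. Qed.
Lemma mukaiN a x b : - M a x b = M (- a) (- x) (- b).
Proof. by rewrite -!scaleN1r mukaiZ !mulN1r. Qed.
Lemma mukaiB a x b a' x' b' : M a x b - M a' x' b' = M (a - a') (x - x') (b - b').
Proof. by rewrite mukaiN mukaiD. Qed.
Lemma mukai0 : M 0 0 0 = 0.
Proof. by rewrite /mukai_vec !raddf0 !row_mx0. Qed.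
Lemma mukai_inj a x b a' x' b' : M a x b = M a' x' b' -> [/\ a = a', x = x' & b = b'].
Proof.
rewrite /mukai_vec => /eq_row_mx [/eq_row_mx [h1 h2] h3].
split => //.
  by have := congr1 (fun A : 'M[rat]_1 => A 0 0) h1; rewrite !mxE.
by have := congr1 (fun A : 'M[rat]_1 => A 0 0) h3; rewrite !mxE.
Qed.

Lemma intvecM a x b : intvec (M a x b) <-> [/\ qint a, intvec x & qint b].
Proof.
split.
  move=> h; split.
  - by have := h (lshift 1 (lshift n ord0)); rewrite /mukai_vec !row_mxEl mxE.
  - by move=> j; have := h (lshift 1 (rshift 1 j)); rewrite /mukai_vec row_mxEl row_mxEr.
  - by have := h (rshift (1 + n) ord0); rewrite /mukai_vec row_mxEr mxE.
move=> [ha hx hb] i.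
rewrite -(splitK i); case: (split i) => [j|j] /=.
  rewrite /mukai_vec row_mxEl.
  rewrite -(splitK j); case: (split j) => [k|k] /=.
    by rewrite row_mxEl (ord1 k) mxE.
  by rewrite row_mxEr.
by rewrite /mukai_vec row_mxEr (ord1 j) mxE.
Qed.

Lemma BYE (G : 'M[rat]_n) a x b a' x' b' :
  bform (mukai_gram G) (M a x b) (M a' x' b') = - (a * b' + b * a') + bform G x x'.
Proof.
rewrite /bform /mukai_gram /mukai_vec.
rewrite mul_row_block mul_row_block mul_row_col !mul_mx_row ?mulmx0 ?mul0mx ?addr0 ?add0r.
rewrite add_row_mx !tr_row_mx !mul_row_col ?addr0 ?add0r.
rewrite !mulmxN !mulmx1 !tr_scalar_mx !mulNmx !mxE !big_ord1 !mxE /= !mulr1n; ring.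

Qed.
End Mukai.


Section NYsec.
Variable n : nat.
Variable G : 'M[int]_n.
Hypothesis Gsym : G^T = G.
Notation BX := (bform (intmx G)).
Notation BY := (bform (mukai_gram (intmx G))).

Lemma BXsym x y : BX x y = BX y x.
Proof. by apply: bform_sym; apply: intmx_sym. Qed.

Lemma BYsym w w' : BY w w' = BY w' w.
Proof.
rewrite (mukaiE w) (mukaiE w') !BYE BXsym; congr (_ + _); ring.
Qed.

Lemma BY_int w w' : intvec w -> intvec w' -> qint (BY w w').
Proof.
rewrite (mukaiE w) (mukaiE w') !intvecM => -[h1 h2 h3] [h1' h2' h3'].
rewrite BYE; apply: qintD; first by apply: qintN; apply: qintD; apply: qintM.
by apply: bform_int => //; apply: intmx_int.
Qed.

Lemma bform0l m (M : 'M[rat]_m) y : bform M 0 y = 0.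
Proof. by rewrite /bform !mul0mx mxE. Qed.
Lemma bform0r m (M : 'M[rat]_m) y : bform M y 0 = 0.
Proof. by rewrite /bform trmx0 mulmx0 mxE. Qed.

Lemma bformBr m (M : 'M[rat]_m) x y z : bform M x (y - z) = bform M x y - bform M x z.
Proof. by rewrite bformD -scaleN1r bformZ mulN1r. Qed.
Lemma bformBl m (M : 'M[rat]_m) x y z : bform M (x - y) z = bform M x z - bform M y z.
Proof. by rewrite bformDl -scaleN1r bformZl mulN1r. Qed.

Variable v : 'rV[rat]_(1 + n + 1).
Hypothesis vv : BY v v = 0.
Notation NY := (NYlat (intmx G) v).

Lemma NYD w w' : NY w -> NY w' -> NY (w + w').
Proof.
move=> [h1 [t ht]] [h1' [t' ht']]; split; first by rewrite bformD h1 h1' addr0.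
exists (t + t'); have -> : w + w' - (t + t') *: v = (w - t *: v) + (w' - t' *: v).
  by rewrite scalerDl opprD addrACA.
exact: intvecD.
Qed.

Lemma NYZ (i : int) w : NY w -> NY (i%:~R *: w).
Proof.
move=> [h1 [t ht]]; split; first by rewrite bformZ h1 mulr0.
exists (i%:~R * t); rewrite -scalerA -scalerBr; exact: intvecZ.
Qed.

Lemma NYv (t : rat) : NY (t *: v).
Proof. by split; [rewrite bformZ vv mulr0 | exists t; rewrite subrr; apply: intvec0]. Qed.

Lemma NY_int w w' : NY w -> NY w' -> qint (BY w w').
Proof.
move=> [h1 [t ht]] [h1' [t' ht']].
have -> : BY w w' = BY (w - t *: v) (w' - t' *: v).
  rewrite bformBr !bformBl !bformZ !bformZl vv (BYsym w v) h1 h1'.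
  by rewrite !mulr0 !subr0.
exact: BY_int.
Qed.
End NYsec.


Lemma bezoutq (a b : nat) : coprime a b ->
  exists al be : rat, [/\ qint al, qint be & al * a%:R + be * b%:R = 1].
Proof.
move=> h; have [u [v e]] : exists u v : int, u * a%:Z + v * b%:Z = 1.
  by apply: bezoutz; rewrite coprimezE !absz_nat.
exists u%:~R, v%:~R; split; try apply: qint_int.
by have := congr1 (fun z : int => z%:~R : rat) e; rewrite intrD !intrM.
Qed.

Section Ysec.
Variables (n : nat) (G : 'M[int]_n) (Ht : 'rV[rat]_n) (d g a b c N : nat).
Hypothesis Gsym : G^T = G.
Hypotheses (d0 : (0 < d)%N) (g0 : (0 < g)%N) (a0 : (0 < a)%N) (b0 : (0 < b)%N) (c0 : (0 < c)%N).
Hypotheses (cab : coprime a b) (cd : coprime c d) (cg : coprime c g).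
Hypothesis hN : (2 * a * b = d * d * g * N)%N.
Hypothesis LHt : intvec Ht.
Hypothesis primX : forall q, intvec (q *: Ht) -> qint q.
Notation BX := (bform (intmx G)).
Notation BY := (bform (mukai_gram (intmx G))).
Hypothesis gamX : lat_gamma BX (@intvec n) Ht g.
Hypothesis hT : BX Ht Ht = g%:R * (c * c * N)%N%:R.
Notation v := (mukai_vec (a * c)%N%:R (d%:R *: Ht) (b * c)%N%:R).
Notation h := (mukai_vec (- a%:R) 0 b%:R).
Notation ht := (d%:R^-1 *: h).
Notation NY := (NYlat (intmx G) v).
Notation M := (@mukai_vec n).

Lemma dnz : d%:R != 0 :> rat. Proof. by rewrite pnatr_eq0 -lt0n. Qed.
Lemma gnz : g%:R != 0 :> rat. Proof. by rewrite pnatr_eq0 -lt0n. Qed.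
Lemma anz : a%:R != 0 :> rat. Proof. by rewrite pnatr_eq0 -lt0n. Qed.
Lemma bnz : b%:R != 0 :> rat. Proof. by rewrite pnatr_eq0 -lt0n. Qed.
Lemma cnz : c%:R != 0 :> rat. Proof. by rewrite pnatr_eq0 -lt0n. Qed.
Lemma hNq : N%:R = 2 * a%:R * b%:R / (d%:R * d%:R * g%:R) :> rat.
Proof.
have := congr1 (fun k : nat => k%:R : rat) hN; rewrite /= !natrM => ->.
by field; rewrite ?dnz ?gnz.
Qed.
Lemma hTq : BX Ht Ht = 2 * a%:R * b%:R * c%:R * c%:R / (d%:R * d%:R).
Proof.
rewrite hT !natrM hNq; field; rewrite ?dnz ?gnz //.
Qed.

Lemma vv : BY v v = 0.
Proof.
rewrite BYE bformZ bformZl hTq !natrM; field; exact: dnz.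
Qed.

Lemma Bv_iota y : BY v (iotaY y) = d%:R * BX Ht y.
Proof. rewrite /iotaY BYE bformZl; ring. Qed.
Lemma Bh_iota y : BY h (iotaY y) = 0.
Proof. rewrite /iotaY BYE bform0l; ring. Qed.
Lemma Bhv : BY h v = 0.
Proof. rewrite BYE bform0l !natrM; ring. Qed.
Lemma Bvh : BY v h = 0.
Proof. rewrite BYE bform0r !natrM; ring. Qed.
Lemma BY_hh : BY h h = (2 * a * b)%N%:R.
Proof. rewrite BYE bform0l !natrM; ring. Qed.

Lemma NY_h : NY h.
Proof.
split; first exact: Bvh.
exists 0; rewrite scale0r subr0; apply/intvecM; split.
- by apply: qintN; apply: qint_nat.
- exact: intvec0.
- exact: qint_nat.
Qed.

Lemma NY_ht : NY ht.
Proof.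
split; first by rewrite bformZ Bvh mulr0.
have [al [be [qal qbe hab]]] := bezoutq cab.
have [c' [la [qc' qla hcd]]] := bezoutq cd.
set e := be * b%:R - al * a%:R.
have qe : qint e by apply: qintB; apply: qintM => //; apply: qint_nat.
exists (c' * e / d%:R).
rewrite mukaiZ mukaiZ mukaiB; apply/intvecM; split.
- have -> : d%:R^-1 * - a%:R - c' * e / d%:R * (a * c)%N%:R =
            - (d%:R * g%:R * N%:R * be - a%:R * la * e).
    have hc : c' = (1 - la * d%:R) / c%:R by rewrite -[X in (X - _) / _]hcd; field; apply: cnz.
    have ha : al = (1 - be * b%:R) / a%:R by rewrite -[X in (X - _) / _]hab; field; apply: anz.
    rewrite /e hc ha hNq !natrM; field.
    by rewrite dnz cnz anz gnz.
  apply: qintN; apply: qintB; apply: qintM => //; try apply: qintM => //;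
    try apply: qintM => //; try apply: qintM; apply: qint_nat.
- have -> : d%:R^-1 *: (0 : 'rV[rat]_n) - c' * e / d%:R *: (d%:R *: Ht) = (- (c' * e)) *: Ht.
    rewrite scaler0 sub0r scalerA -scaleNr; congr (_ *: _); field; exact: dnz.
  by apply: intvecZq => //; apply: qintN; apply: qintM.
- have -> : d%:R^-1 * b%:R - c' * e / d%:R * (b * c)%N%:R =
            d%:R * g%:R * N%:R * al + b%:R * la * e.
    have hc : c' = (1 - la * d%:R) / c%:R by rewrite -[X in (X - _) / _]hcd; field; apply: cnz.
    have hb : be = (1 - al * a%:R) / b%:R by rewrite -[X in (X - _) / _]hab; field; apply: bnz.
    rewrite /e hc hb hNq !natrM; field.
    by rewrite dnz cnz bnz gnz.
  apply: qintD; apply: qintM => //; try apply: qintM => //;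
    try apply: qintM => //; try apply: qintM; apply: qint_nat.
Qed.

Lemma NY_elim w : NY w -> exists t p0 x p2,
  [/\ w = M p0 x p2 + t *: v, qint p0, intvec x, qint p2 & BY v (M p0 x p2) = 0].
Proof.
move=> [h1 [t hp]]; exists t.
move: hp; rewrite (mukaiE (w - t *: v)) => hp.
exists (mw0 (w - t *: v)), (mwx (w - t *: v)), (mw2 (w - t *: v)).
have [q0 qx q2] := proj1 (intvecM _ _ _) hp.
split => //; first by rewrite -mukaiE subrK.
by rewrite -mukaiE bformBr h1 bformZ vv mulr0 subr0.
Qed.

Lemma prim_ht q : NY (q *: ht) -> qint q.
Proof.
move=> [_ [t hp]].
move: hp; rewrite scalerA !mukaiZ mukaiB => /intvecM [hA hx hB].
have hj : qint (t * d%:R).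
  rewrite -[t * _]opprK; apply: qintN; apply: primX.
  by move: hx; rewrite scaler0 sub0r scalerA scaleNr.
have [al [be [qal qbe hab]]] := bezoutq cab.
set A := q * d%:R^-1 * - a%:R - t * (a * c)%N%:R in hA.
set Bq := q * d%:R^-1 * b%:R - t * (b * c)%N%:R in hB.
have -> : q = - al * d%:R * A + be * d%:R * Bq - (t * d%:R) * c%:R * (al * a%:R - be * b%:R).
  have ha : al = (1 - be * b%:R) / a%:R by rewrite -[X in (X - _) / _]hab; field; apply: anz.
  rewrite /A /Bq ha !natrM; field.
  by rewrite dnz anz.
apply: qintB; first apply: qintD.
- by apply: qintM => //; apply: qintM; [apply: qintN|apply: qint_nat].
- by apply: qintM => //; apply: qintM => //; apply: qint_nat.
- apply: qintM; first by apply: qintM => //; apply: qint_nat.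
  by apply: qintB; apply: qintM => //; apply: qint_nat.
Qed.

Lemma Bht_v : BY ht v = 0.
Proof. by rewrite bformZl Bhv mulr0. Qed.

Lemma BY_htht : BY ht ht = 2 * a%:R * b%:R / (d%:R * d%:R).
Proof.
rewrite bformZ bformZl BY_hh !natrM; field; exact: dnz.
Qed.

Lemma TP_ht : 0 < BY ht ht.
Proof.
rewrite BY_htht; apply: divr_gt0; last by rewrite -natrM ltr0n muln_gt0 d0.
by rewrite mulr_gt0 ?ltr0n // mulr_gt0 ?ltr0n.
Qed.

Lemma gam_ht : lat_gamma BY NY ht g.
Proof.
split => // q; split.
  move=> [w [/NY_elim [t [p0 [x [p2 [-> q0 qx q2 Bp]]]]] <-]].
  rewrite bformD bformZ Bht_v mulr0 addr0.
  rewrite bformZl BYE bform0l.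
  move: Bp; rewrite BYE bformZl => Bp.
  have [m hm] : exists m : int, BX Ht x = g%:R * m%:~R.
    by apply/(proj1 (proj2 gamX _)); exists x.
  have hm2 : d%:R * g%:R * m%:~R = c%:R * (a%:R * p2 + b%:R * p0).
    rewrite -mulrA -hm; move: Bp; rewrite !natrM => Bp.
    apply/eqP; rewrite -subr_eq0 -(eqP (introT eqP Bp)); apply/eqP; ring.
  have cdg : coprime c (d * g) by rewrite coprimeMr cd cg.
  have [u [w0 [qu qw huw]]] := bezoutq cdg.
  have [m' [qm' hm']] : exists m', qint m' /\ a%:R * p2 + b%:R * p0 = d%:R * g%:R * m'.
    exists (m%:~R * u + w0 * (a%:R * p2 + b%:R * p0)); split.
      apply: qintD; first by apply: qintM => //; apply: qint_int.
      by apply: qintM => //; apply: qintD; apply: qintM => //; apply: qint_nat.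
    have hu : u = (1 - w0 * (d * g)%N%:R) / c%:R by rewrite -[X in (X - _) / _]huw; field; apply: cnz.
    have hx : (a%:R * p2 + b%:R * p0) = d%:R * g%:R * m%:~R / c%:R by rewrite hm2; field; apply: cnz.
    rewrite hu hx !natrM; field; by rewrite cnz.
  have [al [be [qal qbe hab]]] := bezoutq cab.
  set z := al * (2 * a%:R * m' - d%:R * N%:R * p0) + be * d%:R * N%:R * p2 - m'.
  have qz : qint z by rewrite /z; qauto.
  have [zi hzi] := proj1 (qintP z) qz.
  exists zi; rewrite -hzi /z.
  have ha : al = (1 - be * b%:R) / a%:R by rewrite -[X in (X - _) / _]hab; field; apply: anz.
  have hp0 : p0 = (d%:R * g%:R * m' - a%:R * p2) / b%:R by rewrite -hm'; field; apply: bnz.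
  rewrite ha hp0 hNq; field.
  by rewrite dnz anz bnz gnz.
move=> [z ->].
have [x0 [Lx0 Bx0]] : exists x, intvec x /\ BX Ht x = g%:R.
  by apply/(proj2 (proj2 gamX _)); exists 1; rewrite mulr1.
have [al [be [qal qbe hab]]] := bezoutq cab.
set W := M (- (d%:R * g%:R * be)) ((c%:R * (al * a%:R - be * b%:R)) *: x0) (d%:R * g%:R * al).
exists (z%:~R *: W); split.
  apply: NYZ; split.
    rewrite BYE bformZ bformZl Bx0 !natrM.
    have ha : al = (1 - be * b%:R) / a%:R by rewrite -[X in (X - _) / _]hab; field; apply: anz.
    rewrite ha; field; exact: anz.
  exists 0; rewrite scale0r subr0; apply/intvecM; split.
  - by apply: qintN; apply: qintM => //; apply: qintM; apply: qint_nat.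
  - apply: intvecZq => //; apply: qintM; first exact: qint_nat.
    by apply: qintB; apply: qintM => //; apply: qint_nat.
  - by apply: qintM => //; apply: qintM; apply: qint_nat.
rewrite bformZ mulrC; congr (_ * _).
rewrite bformZl BYE bform0l.
have ha : al = (1 - be * b%:R) / a%:R by rewrite -[X in (X - _) / _]hab; field; apply: anz.
rewrite ha; field; by rewrite dnz anz.
Qed.

End Ysec.

Lemma gen3_ext (V : lmodType rat) (L K1 K2 : V -> Prop) P y :
  (forall z, K1 z <-> K2 z) -> seteq L (gen3 P K1 y) -> seteq L (gen3 P K2 y).
Proof.
move=> hK hs z; rewrite hs; split; move=> [i [j [k [hk e]]]]; exists i, j, k; split => //; exact/hK.
Qed.

Lemma order_ext (V : lmodType rat) (K1 K2 : V -> Prop) u k :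
  (forall z, K1 z <-> K2 z) -> order_mod K1 u k -> order_mod K2 u k.
Proof.
move=> hK [h1 h2 h3]; split => //; first exact/hK.
by move=> k' hk' /hK; apply: h3.
Qed.


Section Ysec.
Variables (n : nat) (G : 'M[int]_n) (Ht : 'rV[rat]_n) (d g a b c N : nat).
Hypothesis Gsym : G^T = G.
Hypotheses (d0 : (0 < d)%N) (g0 : (0 < g)%N) (a0 : (0 < a)%N) (b0 : (0 < b)%N) (c0 : (0 < c)%N).
Hypotheses (cab : coprime a b) (cd : coprime c d) (cg : coprime c g).
Hypothesis hN : (2 * a * b = d * d * g * N)%N.
Hypothesis LHt : intvec Ht.
Hypothesis primX : forall q, intvec (q *: Ht) -> qint q.
Notation BX := (bform (intmx G)).
Notation BY := (bform (mukai_gram (intmx G))).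
Hypothesis gamX : lat_gamma BX (@intvec n) Ht g.
Hypothesis hT : BX Ht Ht = g%:R * (c * c * N)%N%:R.
Notation v := (mukai_vec (a * c)%N%:R (d%:R *: Ht) (b * c)%N%:R).
Notation h := (mukai_vec (- a%:R) 0 b%:R).
Notation ht := (d%:R^-1 *: h).
Notation NY := (NYlat (intmx G) v).
Notation M := (@mukai_vec n).


Lemma dnz' : d%:R != 0 :> rat. Proof. by rewrite pnatr_eq0 -lt0n. Qed.
Notation KX := (Kperp BX (@intvec n) Ht).
Notation KY := (Kperp BY NY h).

Lemma L3a k : KX k -> KY (iotaY k).
Proof.
move=> [Lk Bk]; split; last exact: Bh_iota.
split; first by rewrite Bv_iota Bk mulr0.
by exists 0; rewrite scale0r subr0 /iotaY; apply/intvecM; split; rewrite ?qint0.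
Qed.

Lemma vv' : BY v v = 0. Proof. exact: (vv d0 g0 hN hT). Qed.

Lemma hTq' : BX Ht Ht = 2 * a%:R * b%:R * c%:R * c%:R / (d%:R * d%:R).
Proof. exact: (hTq d0 g0 hN hT). Qed.

Lemma L3b : seteq (qspan KY) (fun z => exists y (t : rat), qspan KX y /\ z = iotaY y + t *: v).
Proof.
have anz : a%:R != 0 :> rat by rewrite pnatr_eq0 -lt0n.
have cnz : c%:R != 0 :> rat by rewrite pnatr_eq0 -lt0n.
have dnz := dnz'.
move=> z; split.
  move=> [k [k0 [hN1 hB]]].
  move: (mukaiE z) hN1 hB => zE; rewrite zE.
  move: (mw0 z) (mwx z) (mw2 z) => z0 zx z2 [hv [t0 hint]] hB.
  clear zE.
  have knz : k%:R != 0 :> rat by rewrite pnatr_eq0 -lt0n.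
  move: hB; rewrite bformZ BYE bform0l => /eqP; rewrite mulf_eq0 (negbTE knz) /= => /eqP hB.
  have hz2 : z2 = b%:R * z0 / a%:R.
    apply: (mulfI anz); rewrite mulrCA mulfV // mulr1; apply/eqP; rewrite -subr_eq0.
    by rewrite -(eqP (introT eqP hB)) ; apply/eqP; ring.
  move: hv; rewrite bformZ BYE bformZl => /eqP; rewrite mulf_eq0 (negbTE knz) /= => /eqP hv.
  have hBx : BX Ht zx = ((a * c)%N%:R * z2 + (b * c)%N%:R * z0) / d%:R.
    apply: (mulfI dnz); rewrite mulrCA mulfV // mulr1; apply/eqP; rewrite -subr_eq0.
    by rewrite -(eqP (introT eqP hv)); apply/eqP; ring.
  move: hint; rewrite mukaiZ mukaiZ mukaiB => /intvecM [h0 hx h2].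
  exists (zx - (z0 / (a * c)%N%:R) *: (d%:R *: Ht)), (z0 / (a * c)%N%:R); split.
    exists (k * a * c)%N; split; first by rewrite !muln_gt0 k0 a0 c0.
    split.
      have -> : (k * a * c)%N%:R *: (zx - z0 / (a * c)%N%:R *: (d%:R *: Ht)) =
         (a * c)%N%:R *: (k%:R *: zx - t0 *: (d%:R *: Ht)) - (k%:R * z0 - t0 * (a * c)%N%:R) *: (d%:R *: Ht).
        apply/rowP => l; rewrite !mxE !natrM; field; by rewrite anz cnz.
      apply: intvecB; first by apply: intvecZq; [apply: qint_nat|].
      by apply: intvecZq => //; apply: intvecZq => //; apply: qint_nat.
    rewrite bformZ bformBr !bformZ hTq' hBx hz2 !natrM; field.
    by rewrite anz cnz dnz.
  rewrite /iotaY !mukaiZ mukaiD; congr mukai_vec.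
  - by rewrite !natrM; field; rewrite anz cnz.
  - by rewrite subrK.
  - by rewrite hz2 !natrM; field; rewrite anz cnz.
move=> [y [t [[k [k0 [Ly By]]] ->]]].
have knz : k%:R != 0 :> rat by rewrite pnatr_eq0 -lt0n.
have By0 : BX Ht y = 0.
  by move/eqP: By; rewrite bformZ mulf_eq0 (negbTE knz) /= => /eqP.
exists k; split => //; split.
  split.
    rewrite bformZ bformD bformZ Bv_iota By0 vv'; ring.
  exists (k%:R * t); rewrite scalerDr scalerA addrK /iotaY mukaiZ; apply/intvecM.
  by split; rewrite ?mulr0 ?qint0.
rewrite bformZ bformD bformZ Bh_iota Bhv; ring.
Qed.

Lemma TPX : 0 < BX Ht Ht.
Proof.
rewrite hTq'; apply: divr_gt0; last by rewrite -natrM ltr0n muln_gt0 d0.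
by rewrite !mulr_gt0 ?ltr0n.
Qed.

Lemma mainX uX : is_ustar BX (@intvec n) Ht g uX ->
  seteq (@intvec n) (gen3 Ht KX (g%:R *: Pstar BX Ht + uX)).
Proof.
move=> hu; apply: (proj1 (gen_main (BXsym Gsym) (@bformD _ _) (@bformZ _ _) (@intvecD n) (@intvecZ n) LHt TPX gamX primX hu)).
Qed.

Lemma L3c uX : is_ustar BX (@intvec n) Ht g uX ->
  seteq KY (fun z => exists k (i : int) (t : rat), KX k /\
     z = iotaY k + i%:~R *: iotaY (((2 * a * b)%N%:R / (d * d * g)%N%:R * c%:R) *: uX) + t *: v).
Proof.
move=> hu.
have anz : a%:R != 0 :> rat by rewrite pnatr_eq0 -lt0n.
have bnz : b%:R != 0 :> rat by rewrite pnatr_eq0 -lt0n.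
have cnz : c%:R != 0 :> rat by rewrite pnatr_eq0 -lt0n.
have gnz : g%:R != 0 :> rat by rewrite pnatr_eq0 -lt0n.
have dnz := dnz'.
have Tnz : BX Ht Ht != 0 by rewrite gt_eqF // TPX.
have orth : BX Ht uX = 0 by apply: (ustar_orth (@bformZ _ _) hu).
move=> z; split.
  move=> [hNz hBz].
  have [t [p0 [x [p2 [zE q0 qx q2 Bp]]]]] := NY_elim d0 g0 hN hT hNz.
  subst z.
  move: hBz; rewrite bformD bformZ Bhv mulr0 addr0 BYE bform0l => hBz.
  have hz2 : p2 = b%:R * p0 / a%:R.
    apply: (mulfI anz); rewrite mulrCA mulfV // mulr1; apply/eqP; rewrite -subr_eq0.
    by rewrite -(eqP (introT eqP hBz)) ; apply/eqP; ring.
  have [al [be [qal qbe hab]]] := bezoutq cab.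
  have [la [qla hp0]] : exists la, qint la /\ p0 = a%:R * la.
    exists (al * p0 + be * p2); split; first by qauto.
    rewrite hz2; have ha : al = (1 - be * b%:R) / a%:R by rewrite -[X in (X - _) / _]hab; field.
    rewrite ha; field => //.
  have hp2 : p2 = b%:R * la by rewrite hz2 hp0; field.
  rewrite hp0 hp2 in Bp *; clear hz2 hp0 hp2 hBz q0 q2 hNz.
  move: Bp; rewrite BYE bformZl => Bp.
  have [i [j [k [[Lk Bk] xE]]]] := proj1 (mainX hu x) qx.
  have hBx : BX Ht x = 2 * a%:R * b%:R * c%:R * la / d%:R.
    apply: (mulfI dnz); rewrite [RHS]mulrC mulfVK //; apply/eqP; rewrite -subr_eq0.
    by rewrite -(eqP (introT eqP Bp)) !natrM; apply/eqP; ring.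
  have hj : j%:~R = (2 * a%:R * b%:R * c%:R * la / d%:R - i%:~R * BX Ht Ht) / g%:R :> rat.
    rewrite -hBx xE !(bformD, bformZ) Bk orth; field.
    by rewrite gnz Tnz.
  have [ii hii] := proj1 (qintP (la * d%:R - i%:~R * c%:R)) ltac:(by qauto).
  exists k, ii, (t + la / c%:R); split => //.
  rewrite xE -hii /iotaY !mukaiZ !mukaiD; congr mukai_vec.
  - by rewrite !natrM; field.
  - apply/rowP => l; rewrite !mxE hj /Pstar hTq' ?mxE !natrM; field.
    by rewrite anz bnz cnz dnz gnz.
  - by rewrite !natrM; field.
move=> [k [ii [t [[Lk Bk] ->]]]].
have hBF : BX Ht (((2 * a * b)%N%:R / (d * d * g)%N%:R * c%:R) *: uX) = 0.
  by rewrite bformZ orth mulr0.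
split; last first.
  by rewrite !bformD !bformZ !Bh_iota Bhv; ring.
split.
  by rewrite !bformD !bformZ !Bv_iota Bk hBF vv'; ring.
have [c' [la [qc' qla hcd]]] := bezoutq cd.
pose l0 := ii%:~R * la.
pose i0 := - (ii%:~R * c').
pose j : rat := ii%:~R * N%:R * c%:R.
pose x := i0 *: Ht + k + j *: (g%:R *: Pstar BX Ht + uX).
exists (t - l0 / c%:R).
have -> : iotaY k + ii%:~R *: iotaY (((2 * a * b)%N%:R / (d * d * g)%N%:R * c%:R) *: uX) + t *: v
   - (t - l0 / c%:R) *: v = mukai_vec (a%:R * l0) x (b%:R * l0).
  rewrite /iotaY !mukaiZ !mukaiD mukaiB; congr mukai_vec.
  - by rewrite !natrM; field.
  - have hc : c' = (1 - la * d%:R) / c%:R by rewrite -[X in (X - _) / _]hcd; field.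
    apply/rowP => l; rewrite /x /i0 /j /l0 /Pstar hTq' hc (hNq d0 g0 hN) !mxE !natrM; field.
    by rewrite anz bnz cnz dnz gnz.
  - by rewrite !natrM; field.
apply/intvecM; split; try by rewrite /l0; qauto.
rewrite /x; apply: intvecD; last by apply: intvecZq; [rewrite /j; qauto | case: hu].
apply: intvecD => //; apply: intvecZq => //; rewrite /i0; qauto.
Qed.

Lemma L3d uX uY (m : int) : is_ustar BX (@intvec n) Ht g uX -> is_ustar BY NY ht g uY ->
  (m = -1 %[mod (2 * a)%N])%Z -> (m = 1 %[mod (2 * b)%N])%Z ->
  KY (uY - iotaY ((m%:~R * c%:R) *: uX)).
Proof.
move=> hX hY ma mb.
have anz : a%:R != 0 :> rat by rewrite pnatr_eq0 -lt0n.
have bnz : b%:R != 0 :> rat by rewrite pnatr_eq0 -lt0n.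
have cnz : c%:R != 0 :> rat by rewrite pnatr_eq0 -lt0n.
have gnz : g%:R != 0 :> rat by rewrite pnatr_eq0 -lt0n.
have dnz := dnz'.
have [mu [qmu hmu]] : exists mu, qint mu /\ m%:~R = 2 * a%:R * mu - 1 :> rat.
  move/eqP: ma; rewrite eqz_mod_dvd => /dvdzP [q hq].
  exists q%:~R; split; first exact: qint_int.
  have := congr1 (fun z : int => z%:~R : rat) hq; rewrite /= intrB intrM => e.
  rewrite -[m%:~R](subrK (-1)) e -pmulrn natrM; ring.
have [nu [qnu hnu]] : exists nu, qint nu /\ m%:~R = 2 * b%:R * nu + 1 :> rat.
  move/eqP: mb; rewrite eqz_mod_dvd => /dvdzP [q hq].
  exists q%:~R; split; first exact: qint_int.
  have := congr1 (fun z : int => z%:~R : rat) hq; rewrite /= intrB intrM => e.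
  rewrite -[m%:~R](subrK 1) e -pmulrn natrM; ring.
have orthX : BX Ht uX = 0 by apply: (ustar_orth (@bformZ _ _) hX).
have orthY : BY h uY = 0.
  have := ustar_orth (@bformZ _ _) hY; rewrite bformZl => /eqP.
  by rewrite mulf_eq0 invr_eq0 (negbTE dnz) /= => /eqP.
have BvuY : BY v uY = 0.
  have [[[k [k0 [[hv _] _]]] _] _] := hY.
  move/eqP: hv; rewrite bformZ mulf_eq0 pnatr_eq0 (gtn_eqF k0) /=; by move/eqP.
have [_ LW] := hY.
have [tW [p0 [x [p2 [WE q0 qx q2 _]]]]] := NY_elim d0 g0 hN hT LW.
have uYE : uY = mukai_vec p0 x p2 + tW *: v - g%:R *: Pstar BY ht.
  by rewrite -WE addrC addKr.
have [_ LX] := hX.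
move: LX; set X := g%:R *: Pstar BX Ht + uX => LX.
have uXE : uX = X - g%:R *: Pstar BX Ht by rewrite /X addrC addKr.
split; last first.
  by rewrite bformBr Bh_iota orthY subr0.
split.
  by rewrite bformBr Bv_iota bformZ orthX BvuY; ring.
exists (tW + m%:~R * g%:R * d%:R / (2 * a%:R * b%:R * c%:R)).
have -> : uY - iotaY ((m%:~R * c%:R) *: uX) -
    (tW + m%:~R * g%:R * d%:R / (2 * a%:R * b%:R * c%:R)) *: v =
    mukai_vec p0 x p2 - iotaY ((m%:~R * c%:R) *: X) +
    mukai_vec (- (g%:R * d%:R * nu)) 0 (- (g%:R * d%:R * mu)).
  rewrite uYE uXE /Pstar BY_htht ?d0 ?hN //.
  rewrite /iotaY; do 10 rewrite ?mukaiZ ?mukaiB ?mukaiD; congr mukai_vec.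
  - rewrite hnu !natrM; field; by rewrite anz bnz cnz dnz.
  - apply/rowP => l; rewrite hTq' !mxE ?natrM; field.
    by rewrite (gt_eqF TPX) anz bnz cnz dnz.
  - rewrite hmu !natrM; field; by rewrite anz bnz cnz dnz.
apply: intvecD; first apply: intvecB.
- by apply/intvecM.
- rewrite /iotaY; apply/intvecM; split; rewrite ?qint0 //.
  by apply: intvecZq => //; qauto.
- apply/intvecM; split; try qauto; exact: intvec0.
Qed.

End Ysec.


Unset Implicit Arguments. Set Strict Implicit. Set Printing Implicit Defensive.

Theorem proposition2p3p1 (n : nat) (G : 'M[int]_n) (H : 'rV[rat]_n) (r s d g : nat) :
  G^T = G -> (forall i, (2 %| G i i)%Z) -> \det G != 0 ->
  (0 < r)%N -> (0 < s)%N -> (0 < d)%N ->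
  intvec H -> bform (intmx G) H H = (2 * r * s)%N%:R ->
  primitive (@intvec n) (@zero_set _) ((d%:R)^-1 *: H) ->
  primitive (@intvec _) (@zero_set _)
            (mukai_vec r%:R H s%:R) ->
  lat_gamma (bform (intmx G)) (@intvec n) ((d%:R)^-1 *: H) g ->
  coprime (gcdn r s) (d * g) ->
  let BX := bform (intmx G) in
  let NX := @intvec n in
  let Ht := (d%:R)^-1 *: H in
  let KX := Kperp BX NX Ht in
  let c := gcdn r s in
  let a := (r %/ c)%N in
  let b := (s %/ c)%N in
  let v := mukai_vec r%:R H s%:R in
  let BY := bform (mukai_gram (intmx G)) in
  let NY := NYlat (intmx G) v in
  let h := mukai_vec (- a%:R) 0 b%:R in
  let ht := (d%:R)^-1 *: h in
  let KY := Kperp BY NY h in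
  (* (1) *)
  [/\ Pstar BX Ht = ((d * d)%N%:R / (2 * a * b * (c * c))%N%:R) *: Ht,
      (exists u, is_ustar BX NX Ht g u)
    & forall u, is_ustar BX NX Ht g u ->
        seteq NX (gen3 Ht KX (g%:R *: Pstar BX Ht + u)) /\
        exists k : nat, order_mod KX u k /\
                        (k%:R : rat) = (2 * a * b * (c * c))%N%:R / (d * d * g)%N%:R]
  /\
  (* (2) *)
  [/\ [/\ NY h, BY h h = (2 * a * b)%N%:R, NY ht & primitive NY (lineQ v) ht],
      lat_gamma BY NY ht g,
      Pstar BY ht = ((d * d)%N%:R / (2 * a * b)%N%:R) *: ht,
      (exists u, is_ustar BY NY ht g u)
    & forall u, is_ustar BY NY ht g u ->
        seteq NY (gen3 ht KY (g%:R *: Pstar BY ht + u)) /\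
        exists k : nat, order_mod KY u k /\
                        (k%:R : rat) = (2 * a * b)%N%:R / (d * d * g)%N%:R]
  /\
  (* (3) *)
  [/\ (forall k, KX k -> KY (iotaY k)),
      (seteq (qspan KY) (fun z => exists y (t : rat), qspan KX y /\ z = iotaY y + t *: v))
    & forall (uX : 'rV[rat]_n) (uY : 'rV[rat]_(1 + n + 1)) (m : int),
        is_ustar BX NX Ht g uX -> is_ustar BY NY ht g uY ->
        (m = -1 %[mod (2 * a)%N])%Z -> (m = 1 %[mod (2 * b)%N])%Z ->
        seteq KY (fun z => exists k (i : int) (t : rat), KX k /\
                    z = iotaY k
                        + i%:~R *: iotaY (((2 * a * b)%N%:R / (d * d * g)%N%:R * c%:R) *: uX)
                        + t *: v) /\
        KY (uY - iotaY ((m%:~R * c%:R) *: uX))].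
Proof.
move=> Gsym _ _ r0 s0 d0 intH HH primHt primv gamX cop BX NX Ht KX c a b v BY NY h ht KY.
have c0 : (0 < c)%N by rewrite gcdn_gt0 r0.
have hr : r = (a * c)%N by rewrite /a divnK // dvdn_gcdl.
have hs : s = (b * c)%N by rewrite /b divnK // dvdn_gcdr.
have a0 : (0 < a)%N by move: r0; rewrite hr muln_gt0 => /andP[].
have b0 : (0 < b)%N by move: s0; rewrite hs muln_gt0 => /andP[].
have cab : coprime a b.
  have e : (c = gcdn a b * c)%N by rewrite /c {1}hr {1}hs muln_gcdl.
  by rewrite /coprime; apply/eqP; move: e; rewrite -{1}[c]mul1n => /eqP; rewrite eqn_pmul2r // => /eqP.
have [cd cg] : coprime c d /\ coprime c g by move: cop; rewrite coprimeMr => /andP.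
have dn : d%:R != 0 :> rat by rewrite pnatr_eq0 -lt0n.
have HHt : H = d%:R *: Ht by rewrite /Ht scalerA mulfV ?scale1r.
rewrite -/Ht in primHt gamX.
have vE : v = mukai_vec (a * c)%N%:R (d%:R *: Ht) (b * c)%N%:R by rewrite /v -HHt -hr -hs.
have hE : h = mukai_vec (- a%:R) 0 b%:R by [].
have htE : ht = d%:R^-1 *: h by [].
clearbody v h ht Ht.
subst H.
clearbody c a b; subst r s.
clear primv cop.
have LHt : intvec Ht by case: primHt.
have primX := prim_strong primHt.
have anz : a%:R != 0 :> rat by rewrite pnatr_eq0 -lt0n.
have bnz : b%:R != 0 :> rat by rewrite pnatr_eq0 -lt0n.
have cnz : c%:R != 0 :> rat by rewrite pnatr_eq0 -lt0n.
have hT0 : bform (intmx G) Ht Ht = (2 * a * b * (c * c))%N%:R / (d * d)%N%:R.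
  move: HH; rewrite bformZ bformZl => HH.
  rewrite /BX; apply: (mulfI dn); apply: (mulfI dn); rewrite HH !natrM; field.
  by rewrite dn.
have TPX : 0 < bform (intmx G) Ht Ht.
  by rewrite hT0 divr_gt0 // ltr0n !muln_gt0 ?a0 ?b0 ?c0 ?d0.
have g0 : (0 < g)%N by case: gamX.
have gnz : g%:R != 0 :> rat by rewrite pnatr_eq0 -lt0n.
have [kX [kX0 hkX]] := gam_k (BXsym Gsym) LHt TPX gamX.
have ekX : (2 * a * b * (c * c) = d * d * g * kX)%N.
  apply/eqP; rewrite -(eqr_nat rat) !natrM; apply/eqP.
  move: hkX; rewrite hT0 !natrM => e.
  have -> : (2 * a%:R * b%:R * (c%:R * c%:R) : rat) = (2 * a%:R * b%:R * (c%:R * c%:R)) / (d%:R * d%:R) * (d%:R * d%:R).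
    by field.
  rewrite e; ring.
have [N [hN hkN]] : exists N, (2 * a * b = d * d * g * N)%N /\ kX = (c * c * N)%N.
  have hdv : (c * c %| kX)%N.
    have cop2 : coprime (c * c) (d * d * g) by rewrite !coprimeMl !coprimeMr cd cg.
    rewrite -(Gauss_dvdr _ cop2) -ekX; exact: dvdn_mull.
  exists (kX %/ (c * c))%N; split; last by rewrite [RHS]mulnC divnK.
  apply/eqP; rewrite -(eqn_pmul2r (_ : (0 < c * c)%N)); last by rewrite muln_gt0 c0.
  by rewrite ekX -!mulnA divnK.
have hT : bform (intmx G) Ht Ht = g%:R * (c * c * N)%N%:R by rewrite hkX hkN.
subst v h ht.
split.
  split.
  - by rewrite /Pstar /BX hT0; congr (_ *: _); rewrite !natrM; field; rewrite ?dn ?anz ?bnz ?cnz.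
  - exact: (gen_exists (BXsym Gsym) (@bformD _ _) (@bformZ _ _) (@intvecD n) (@intvecZ n)
      (fun x y hx hy => bform_int (@intmx_int _ G) hx hy) LHt TPX gamX).
  move=> u hu.
  have [h1 [k [h2 h3]]] := gen_main (BXsym Gsym) (@bformD _ _) (@bformZ _ _) (@intvecD n) (@intvecZ n) LHt TPX gamX primX hu.
  split => //; exists k; split => //.
  by rewrite h3 hT0 !natrM; field; rewrite ?dn ?anz ?bnz ?cnz ?gnz.
have vv' := vv d0 g0 hN hT.
have NYht := NY_ht G d0 g0 a0 b0 c0 cab cd hN LHt.
have gamY := gam_ht d0 g0 a0 b0 c0 cab cd cg hN gamX hT.
have TPY := TP_ht G d0 a0 b0.
have primY := prim_ht (G:=G) (c:=c) d0 a0 cab primX.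
split.
  split.
  - split.
    + exact: NY_h.
    + exact: BY_hh.
    + exact: NYht.
    + split => //.
        move=> [t e]; move: e; rewrite !mukaiZ => /mukai_inj [e1 _ e3].
        have P0 : 0 < d%:R^-1 * b%:R * a%:R :> rat.
          by rewrite !mulr_gt0 ?invr_gt0 ?ltr0n.
        have e4 : (d%:R^-1 * - a%:R) * b%:R = (d%:R^-1 * b%:R) * a%:R :> rat.
          by rewrite e1 e3 !natrM; ring.
        have e5 : d%:R^-1 * b%:R * a%:R = ((d%:R^-1 * b%:R) * a%:R - (d%:R^-1 * - a%:R) * b%:R) / 2 :> rat.
          by field.
        rewrite e4 subrr mul0r in e5.
        by move: P0; rewrite e5 ltxx.
      move=> n0 x Lx e.
      have [n00|n0pos] := eqVneq n0 0%N.
        move: e; rewrite n00 scale0r => e.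
        have e' : d%:R^-1 *: mukai_vec (- a%:R) 0 b%:R = mukai_vec 0 (0 : 'rV[rat]_n) 0 by rewrite e mukai0.
        move: e'; rewrite mukaiZ => /mukai_inj [_ _ /eqP e3].
        by move: e3; rewrite mulf_eq0 invr_eq0 (negbTE dn) (negbTE bnz).
      have nz : n0%:R != 0 :> rat by rewrite pnatr_eq0.
      have : qint (n0%:R^-1).
        apply: primY; rewrite e scalerA mulVf // scale1r; exact: Lx.
      move=> qn.
      have n1 : (1 <= n0)%N by rewrite lt0n.
      case: (leqP n0 1) => hn; first by apply/eqP; rewrite eqn_leq hn n1.
      exfalso; apply: (qint_between qn); first by rewrite invr_gt0 ltr0n; lia.
      by rewrite invf_lt1 ?ltr0n ?ltr1n //; lia.
  - exact: gamY.
  - rewrite /Pstar /BY (BY_htht G a b d0); congr (_ *: _); rewrite !natrM; field; by rewrite ?dn ?anz ?bnz ?cnz.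
  - exact: (gen_exists (BYsym Gsym) (@bformD _ _) (@bformZ _ _) (@NYD _ _ _) (@NYZ _ _ _)
      (@NY_int _ _ Gsym _ vv') NYht TPY gamY).
  move=> u hu.
  have [h1 [k [h2 h3]]] := gen_main (BYsym Gsym) (@bformD _ _) (@bformZ _ _) (@NYD _ _ _) (@NYZ _ _ _) NYht TPY gamY primY hu.
  have hK : forall z, Kperp BY NY (d%:R^-1 *: mukai_vec (- a%:R) 0 b%:R) z <-> KY z.
    move=> z; rewrite /KY /Kperp /BY bformZl; split; move=> [h4 h5]; split => //.
      by move/eqP: h5; rewrite mulf_eq0 invr_eq0 (negbTE dn) /= => /eqP.
    by rewrite h5 mulr0.
  split; first exact: (gen3_ext hK h1).
  exists k; split; first exact: (order_ext hK h2).
  by rewrite h3 /BY (BY_htht G a b d0) !natrM; field; rewrite ?dn ?anz ?bnz ?cnz ?gnz.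
split.
- move=> k hk; exact: L3a.
- exact: (L3b d0 g0 a0 c0 hN LHt hT).
move=> uX uY m huX huY ma mb; split.
- exact: (L3c Gsym d0 g0 a0 b0 c0 cab cd hN LHt primX gamX hT huX).
- exact: (L3d d0 g0 a0 b0 c0 hN hT huX huY ma mb).
Qed.
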